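(* Let $\kappa$ be a fixed grounding calculus and let $\delta$ be a grounding derivation of a formula $A$ in $\kappa$. Let $\Gamma$ be the list of all grounds and $\Delta$ the list of all conditions occurring in a bar of $\delta$. Then the mediate grounding claim $\Gamma[\Delta]\gg A$ is derivable in any calculus that contains the rules of $\kappa$, the rules for the immediate grounding operator $\blacktriangleright$, and the rules for the mediate grounding operator $\gg$.
   Context: A grounding calculus $\kappa$ is a natural-deduction system whose grounding rules have the form: from premisses $A_1,\dots,A_n$ (the ground) and a possibly empty list of premisses $[C_1,\dots,C_m]$ (the conditions) infer $B$; an application expresses that $A_1,\dots,A_n$ form a ground of $B$ under the conditions $C_1,\dots,C_m$. In a derivation, a formula occurrence that is a premiss of a grounding rule application in a condition position is a condition, otherwise a ground. The language contains propositional variables, $\bot,\neg,\wedge,\vee,\to$, and grounding formulae $\Gamma[\Delta]\blacktriangleright A$ and $\Gamma[\Delta]\gg A$ with $\Gamma,\Delta$ finite lists of formulae ($\Delta$ possibly empty, in which case one writes $\Gamma\blacktriangleright A$, $\Gamma\gg A$). Rules for $\blacktriangleright$: Introduction: if an application of a grounding rule of $\kappa$ with premisses $A_1,\dots,A_n,[C_1,\dots,C_m]$ and conclusion $B$ occurs (with arbitrary derivations of its premisses), one may infer $A_1,\dots,A_n[C_1,\dots,C_m]\blacktriangleright B$ immediately below it. Eliminations: from $\Gamma[\Delta]\blacktriangleright B$ infer $B$, any element of $\Gamma$, any element of $\Delta$; and from $A_1,\dots,A_n[C_1,\dots,C_m]\blacktriangleright B$ infer $\bot$ whenever there is no grounding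 rule application with premisses $A_1,\dots,A_n,[C_1,\dots,C_m]$ and conclusion $B$. Rules for $\gg$: Introductions: from $\Gamma[\Delta]\blacktriangleright A$ infer $\Gamma[\Delta]\gg A$; from $\Gamma[\Delta]\gg A$ and $\Gamma_1,A,\Gamma_2[\Delta_1]\gg B$ infer $\Gamma_1,\Gamma,\Gamma_2[\Delta,\Delta_1]\gg B$; from $\Gamma[\Delta]\gg A$ and $\Gamma_1[\Delta_1,A,\Delta_2]\gg B$ infer $\Gamma_1[\Delta_1,\Gamma,\Delta,\Delta_2]\gg B$. Eliminations: from $\Gamma[\Delta]\gg B$ infer $B$, any element of $\Gamma$, and any element of $\Delta$. A grounding derivation is a derivation constructed by exclusively applying grounding rules of $\kappa$ to a set of consistent hypotheses and containing at least one rule application. For a derivation $\delta$ (each step having one or more premisses and one conclusion), its derivation-tree $t(\delta)$ is the tree whose nodes correspond one-to-one to the formula occurrences of $\delta$, with the root corresponding to the conclusion and the children of a node corresponding one-to-one to the premisses of the step whose conclusion is that node. A bar of $\delta$ is a set of formula occurrences of $\delta$ not containing the conclusion of $\delta$ and whose corresponding nodes share exactly one element with each path from the root of $t(\delta)$ to one of its leaves. *)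

(* Defs.v *)
From Stdlib Require Import List Arith Permutation.
Import ListNotations.

Inductive form : Type :=
  | Var : nat -> form
  | Bot : form
  | Neg : form -> form
  | And : form -> form -> form
  | Or  : form -> form -> form
  | Imp : form -> form -> form
  | IG  : list form -> list form -> form -> form   (* Γ[Δ] ▶ A *)
  | MG  : list form -> list form -> form -> form.  (* Γ[Δ] ≫ A *)

(* A grounding calculus kappa is given by its grounding rule applications:
   [kappa As Cs B] holds iff there is an application of a grounding rule of
   kappa with ground premisses As, condition premisses Cs and conclusion B. *)
Definition grounding_calculus := list form -> list form -> form -> Prop.

(* Derivations built from grounding rule applications:
   a leaf is a hypothesis; a node has ground subderivations [gs], condition
   subderivations [cs], and conclusion [B]. *)
Inductive gtree : Type :=
  | Hyp : form -> gtree
  | App : list gtree -> list gtree -> form -> gtree.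

Definition concl (t : gtree) : form :=
  match t with Hyp A => A | App _ _ B => B end.

Inductive kappa_steps (kappa : grounding_calculus) : gtree -> Prop :=
  | ks_hyp : forall A, kappa_steps kappa (Hyp A)
  | ks_app : forall gs cs B,
      kappa (map concl gs) (map concl cs) B ->
      (forall t, In t gs -> kappa_steps kappa t) ->
      (forall t, In t cs -> kappa_steps kappa t) ->
      kappa_steps kappa (App gs cs B).

Fixpoint hyps (t : gtree) : list form :=
  match t with
  | Hyp A => [A]
  | App gs cs _ => flat_map hyps gs ++ flat_map hyps cs
  end.

(* Consistency of a set of hypotheses: classical satisfiability, where the
   grounding formulae are treated as (independent) atoms. *)
Fixpoint eval (v : nat -> bool) (w : form -> bool) (f : form) : bool :=
  match f with
  | Var n => v n
  | Bot => false
  | Neg a => negb (eval v w a)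
  | And a b => eval v w a && eval v w b
  | Or a b => eval v w a || eval v w b
  | Imp a b => implb (eval v w a) (eval v w b)
  | IG _ _ _ => w f
  | MG _ _ _ => w f
  end.

Definition consistent (H : list form) : Prop :=
  exists (v : nat -> bool) (w : form -> bool), forall A, In A H -> eval v w A = true.

Definition grounding_derivation (kappa : grounding_calculus) (delta : gtree)
    (A : form) : Prop :=
  kappa_steps kappa delta /\
  consistent (hyps delta) /\
  (exists gs cs, delta = App gs cs A)   (* at least one rule application *).

(* Formula occurrences = positions in the derivation tree t(delta).
   The children of [App gs cs B] are indexed 0.. in the order [gs ++ cs]. *)
Definition position := list nat.

Fixpoint subtree (t : gtree) (p : position) : option gtree :=
  match p with
  | [] => Some t
  | i :: p' =>
      match t with
      | Hyp _ => None
      | App gs cs _ =>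
          match nth_error (gs ++ cs) i with
          | Some s => subtree s p'
          | None => None
          end
      end
  end.

Definition children (t : gtree) : list gtree :=
  match t with Hyp _ => [] | App gs cs _ => gs ++ cs end.

Definition valid_pos (t : gtree) (p : position) : Prop := subtree t p <> None.

Definition leaf_pos (t : gtree) (q : position) : Prop :=
  exists s, subtree t q = Some s /\ children s = [].

Definition is_prefix (p q : position) : Prop := exists r, q = p ++ r.

(* A bar: a set (duplicate-free list) of occurrences, not containing the
   conclusion, sharing exactly one element with each root-to-leaf path
   (the nodes of the path to leaf position q are the prefixes of q). *)
Definition is_bar (t : gtree) (bar : list position) : Prop :=
  NoDup bar /\
  (forall p, In p bar -> valid_pos t p /\ p <> []) /\
  (forall q, leaf_pos t q ->
     exists p, In p bar /\ is_prefix p q /\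
       forall p', In p' bar -> is_prefix p' q -> p' = p).

Fixpoint in_cond (t : gtree) (p : position) : bool :=
  match p with
  | [] => false
  | i :: p' =>
      match t with
      | Hyp _ => false
      | App gs cs _ =>
          if i <? length gs then
            match nth_error gs i with
            | Some s => in_cond s p'
            | None => false
            end
          else true
      end
  end.

Definition formula_at (t : gtree) (p : position) : form :=
  match subtree t p with Some s => concl s | None => Bot end.

Definition bar_grounds (t : gtree) (bar : list position) : list form :=
  map (formula_at t) (filter (fun p => negb (in_cond t p)) bar).

Definition bar_conds (t : gtree) (bar : list position) : list form :=
  map (formula_at t) (filter (fun p => in_cond t p) bar).

(* Derivability in a calculus containing the rules of kappa, the rules for
   IG (▶), the rules for MG (≫), and arbitrary further rules [extra]
   ([extra Ps B]: an extra rule instance with premisses Ps, conclusion B),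
   from the hypotheses H. *)
Inductive derivable (kappa : grounding_calculus)
    (extra : list form -> form -> Prop) (H : form -> Prop) : form -> Prop :=
  | d_hyp : forall A, H A -> derivable kappa extra H A
  | d_kappa : forall As Cs B, kappa As Cs B ->
      (forall X, In X As -> derivable kappa extra H X) ->
      (forall X, In X Cs -> derivable kappa extra H X) ->
      derivable kappa extra H B
  | d_IG_intro : forall As Cs B, kappa As Cs B ->
      (forall X, In X As -> derivable kappa extra H X) ->
      (forall X, In X Cs -> derivable kappa extra H X) ->
      derivable kappa extra H (IG As Cs B)
  | d_IG_elim_concl : forall G D B,
      derivable kappa extra H (IG G D B) -> derivable kappa extra H B
  | d_IG_elim_ground : forall G D B X,
      derivable kappa extra H (IG G D B) -> In X G -> derivable kappa extra H X
  | d_IG_elim_cond : forall G D B X,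
      derivable kappa extra H (IG G D B) -> In X D -> derivable kappa extra H X
  | d_IG_elim_bot : forall As Cs B,
      derivable kappa extra H (IG As Cs B) -> ~ kappa As Cs B ->
      derivable kappa extra H Bot
  | d_MG_intro : forall G D A,
      derivable kappa extra H (IG G D A) -> derivable kappa extra H (MG G D A)
  | d_MG_trans_ground : forall G D A G1 G2 D1 B,
      derivable kappa extra H (MG G D A) ->
      derivable kappa extra H (MG (G1 ++ A :: G2) D1 B) ->
      derivable kappa extra H (MG (G1 ++ G ++ G2) (D ++ D1) B)
  | d_MG_trans_cond : forall G D A G1 D1 D2 B,
      derivable kappa extra H (MG G D A) ->
      derivable kappa extra H (MG G1 (D1 ++ A :: D2) B) ->
      derivable kappa extra H (MG G1 (D1 ++ G ++ D ++ D2) B)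
  | d_MG_elim_concl : forall G D B,
      derivable kappa extra H (MG G D B) -> derivable kappa extra H B
  | d_MG_elim_ground : forall G D B X,
      derivable kappa extra H (MG G D B) -> In X G -> derivable kappa extra H X
  | d_MG_elim_cond : forall G D B X,
      derivable kappa extra H (MG G D B) -> In X D -> derivable kappa extra H X
  | d_extra : forall Ps B, extra Ps B ->
      (forall X, In X Ps -> derivable kappa extra H X) ->
      derivable kappa extra H B.

(* Main.v *)
Require Import Defs.
From Stdlib Require Import List Permutation Arith Lia.
Import ListNotations.

Lemma perm_filter {X} (f : X -> bool) l l' :
  Permutation l l' -> Permutation (filter f l) (filter f l').
Proof.
  induction 1; simpl; auto.
  - destruct (f x); auto.
  - destruct (f x), (f y); auto using perm_swap.
  - eapply perm_trans; eauto.
Qed.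

Lemma perm_partition {X Y} (f : X -> bool) (g : X -> Y) l :
  Permutation (map g (filter (fun x => negb (f x)) l) ++ map g (filter f l)) (map g l).
Proof.
  induction l as [|x l IH]; simpl; auto.
  destruct (f x); simpl.
  - eapply perm_trans; [apply Permutation_sym, Permutation_middle|]. auto.
  - auto.
Qed.

Lemma map_filter_flat_map {X Y} (g : X -> Y) (f : X -> bool) (h : nat -> list X) idx :
  map g (filter f (flat_map h idx)) = flat_map (fun i => map g (filter f (h i))) idx.
Proof.
  induction idx; simpl; auto. rewrite filter_app, map_app, IHidx; auto.
Qed.

Lemma filter_all_false {X} (f : X -> bool) l :
  (forall x, In x l -> f x = false) -> filter f l = [].
Proof. induction l; simpl; intros H; auto. rewrite H; auto. Qed.

Lemma filter_all_true {X} (f : X -> bool) l :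
  (forall x, In x l -> f x = true) -> filter f l = l.
Proof. induction l; simpl; intros H; auto. rewrite H, IHl; auto. Qed.

Lemma flat_map_nil {X} (h : nat -> list X) idx :
  (forall i, In i idx -> h i = []) -> flat_map h idx = [].
Proof. induction idx; simpl; intros H; auto. rewrite H, IHidx; auto. Qed.

Lemma singleton_nodup {X} (l : list X) x :
  NoDup l -> In x l -> (forall y, In y l -> y = x) -> l = [x].
Proof.
  intros Hn Hi Ha. destruct l as [|y [|z l]].
  - destruct Hi.
  - rewrite (Ha y); simpl; auto.
  - exfalso. inversion Hn; subst. apply H1. left.
    rewrite (Ha y), (Ha z); simpl; auto.
Qed.

Definition hdi (p : position) : nat := match p with [] => 0 | j :: _ => j end.
Definition Bl (b : list position) (i : nat) := filter (fun p => Nat.eqb (hdi p) i) b.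

Lemma flat_map_insert (x : position) (f : nat -> list position) idx :
  (~ In (hdi x) idx -> flat_map (fun i => if Nat.eqb (hdi x) i then x :: f i else f i) idx
     = flat_map f idx) /\
  (In (hdi x) idx -> NoDup idx ->
    Permutation (flat_map (fun i => if Nat.eqb (hdi x) i then x :: f i else f i) idx)
     (x :: flat_map f idx)).
Proof.
  induction idx as [|j idx IH]; simpl; split; intros.
  - auto.
  - contradiction.
  - destruct (Nat.eqb_spec (hdi x) j). { exfalso; auto. }
    rewrite (proj1 IH); auto.
  - inversion H0; subst. destruct (Nat.eqb_spec (hdi x) j).
    + subst. simpl. rewrite (proj1 IH); auto.
    + destruct H; [congruence|]. eapply perm_trans.
      apply Permutation_app_head. apply (proj2 IH); auto.
      apply Permutation_sym, Permutation_middle.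
Qed.

Lemma perm_blocks (l : list position) n :
  (forall p, In p l -> hdi p < n) -> Permutation l (flat_map (Bl l) (seq 0 n)).
Proof.
  induction l as [|x l IH]; intros H.
  - simpl. rewrite flat_map_nil; auto.
  - unfold Bl; simpl.
    eapply perm_trans; [| apply Permutation_sym, (proj2 (flat_map_insert x (Bl l) _))].
    + apply perm_skip. apply IH. intros; apply H; simpl; auto.
    + apply in_seq. specialize (H x (or_introl eq_refl)). lia.
    + apply seq_NoDup.
Qed.

Lemma subtree_app t p r :
  subtree t (p ++ r) = match subtree t p with Some s => subtree s r | None => None end.
Proof.
  revert t; induction p as [|i p IH]; intros t; simpl; auto.
  destruct t; auto. destruct (nth_error (l ++ l0) i); auto.
Qed.

Fixpoint has_leaf (t : gtree) : exists r, leaf_pos t r.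
Proof.
  destruct t as [A | gs cs B].
  - exists []. exists (Hyp A); simpl; auto.
  - destruct gs as [|c gs].
    + destruct cs as [|c cs].
      * exists []. exists (App [] [] B); simpl; auto.
      * destruct (has_leaf c) as [r [s [Hs Hc]]].
        exists (0 :: r). exists s. simpl. auto.
    + destruct (has_leaf c) as [r [s [Hs Hc]]].
      exists (0 :: r). exists s. simpl. auto.
Qed.

Lemma valid_ext t p : valid_pos t p -> exists q, leaf_pos t q /\ is_prefix p q.
Proof.
  unfold valid_pos. destruct (subtree t p) as [s|] eqn:E; [|congruence].
  intros _. destruct (has_leaf s) as [r [s' [H1 H2]]].
  exists (p ++ r). split.
  - exists s'. rewrite subtree_app, E. auto.
  - exists r; auto.
Qed.

Lemma bar_antichain t b p p' :
  is_bar t b -> In p b -> In p' b -> is_prefix p p' -> p = p'.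
Proof.
  intros [Hn [Hv Hl]] Hp Hp' [r Hr].
  destruct (valid_ext t p') as [q [Hq [r' Hr']]]. { apply Hv; auto. }
  destruct (Hl q Hq) as [p0 [_ [_ Hu]]].
  rewrite (Hu p), (Hu p'); auto.
  - exists r'; auto.
  - exists (r ++ r'). subst. rewrite app_assoc. auto.
Qed.

Lemma concl_derivable kappa extra (Hs : form -> Prop) t :
  kappa_steps kappa t -> (forall X, In X (hyps t) -> Hs X) ->
  derivable kappa extra Hs (concl t).
Proof.
  induction 1 as [A | gs cs B Hk Hg IHg Hc IHc]; intros HH; simpl.
  - apply d_hyp. apply HH. simpl; auto.
  - apply (d_kappa _ _ _ (map concl gs) (map concl cs)); auto.
    + intros X HX. apply in_map_iff in HX. destruct HX as [s [<- Hs']].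
      apply IHg; auto. intros Y HY. apply HH. simpl. apply in_or_app. left.
      apply in_flat_map. eauto.
    + intros X HX. apply in_map_iff in HX. destruct HX as [s [<- Hs']].
      apply IHc; auto. intros Y HY. apply HH. simpl. apply in_or_app. right.
      apply in_flat_map. eauto.
Qed.

Lemma derivable_mono kappa extra Hs X :
  derivable kappa (fun _ _ => False) Hs X -> derivable kappa extra Hs X.
Proof.
  induction 1; try solve [econstructor; eauto].
  all: first [ contradiction | eapply d_IG_elim_concl; eauto | eapply d_MG_elim_concl; eauto
    | eapply d_IG_elim_ground; eauto | eapply d_IG_elim_cond; eauto
    | eapply d_MG_elim_ground; eauto | eapply d_MG_elim_cond; eauto ].
Qed.

Section L.
Variables (kappa : grounding_calculus) (extra : list form -> form -> Prop) (Hs : form -> Prop).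
Notation der := (derivable kappa extra Hs).

Lemma L_cond (c : nat -> form) (target : nat -> list form) G B :
  forall idx Pre Post,
  (forall i, In i idx -> exists Gi Di, Permutation (Gi ++ Di) (target i) /\
      ((Gi = [c i] /\ Di = []) \/ der (MG Gi Di (c i)))) ->
  der (MG G (Pre ++ map c idx ++ Post) B) ->
  exists Dmid, Permutation Dmid (flat_map target idx) /\ der (MG G (Pre ++ Dmid ++ Post) B).
Proof.
  induction idx as [|i idx IH]; intros Pre Post Hok HD.
  - exists []. simpl in *. auto.
  - destruct (Hok i (or_introl eq_refl)) as [Gi [Di [Hp Hc]]].
    assert (HD' : der (MG G (Pre ++ Gi ++ Di ++ map c idx ++ Post) B)).
    { destruct Hc as [[-> ->] | Hm].
      - simpl in *. exact HD.
      - simpl in HD. apply (d_MG_trans_cond _ _ _ Gi Di (c i) G Pre (map c idx ++ Post) B); auto. }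
    destruct (IH (Pre ++ Gi ++ Di) Post) as [Dm [Hp' Hd]].
    + intros; apply Hok; simpl; auto.
    + rewrite <- !app_assoc. exact HD'.
    + exists (Gi ++ Di ++ Dm). split.
      * simpl. rewrite app_assoc. apply Permutation_app; auto.
      * rewrite <- !app_assoc in Hd. rewrite <- !app_assoc. exact Hd.
Qed.

Lemma L_ground (a : nat -> form) (tg td : nat -> list form) B :
  forall idx Pre Post D,
  (forall i, In i idx -> exists Gi Di, Permutation Gi (tg i) /\ Permutation Di (td i) /\
      ((Gi = [a i] /\ Di = []) \/ der (MG Gi Di (a i)))) ->
  der (MG (Pre ++ map a idx ++ Post) D B) ->
  exists Gmid Dout, Permutation Gmid (flat_map tg idx) /\
    Permutation Dout (flat_map td idx ++ D) /\ der (MG (Pre ++ Gmid ++ Post) Dout B).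
Proof.
  induction idx as [|i idx IH]; intros Pre Post D Hok HD.
  - exists [], D. simpl in *. auto.
  - destruct (Hok i (or_introl eq_refl)) as [Gi [Di [Hp1 [Hp2 Hc]]]].
    assert (HD' : der (MG (Pre ++ Gi ++ map a idx ++ Post) (Di ++ D) B)).
    { destruct Hc as [[-> ->] | Hm].
      - simpl in *. exact HD.
      - simpl in HD. apply (d_MG_trans_ground _ _ _ Gi Di (a i) Pre (map a idx ++ Post) D B); auto. }
    destruct (IH (Pre ++ Gi) Post (Di ++ D)) as [Gm [Dm [Hg [Hd Hder]]]].
    + intros; apply Hok; simpl; auto.
    + rewrite <- !app_assoc. exact HD'.
    + exists (Gi ++ Gm), Dm. split; [|split].
      * simpl. apply Permutation_app; auto.
      * eapply perm_trans; [exact Hd|]. simpl.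
        eapply perm_trans; [apply Permutation_app_swap_app|].
        rewrite <- app_assoc. apply Permutation_app; auto.
      * rewrite <- !app_assoc. rewrite <- !app_assoc in Hder. exact Hder.
Qed.
End L.

Lemma flat_map_ext_in' {X} (f g : nat -> list X) idx :
  (forall i, In i idx -> f i = g i) -> flat_map f idx = flat_map g idx.
Proof. induction idx; simpl; intros H; auto. rewrite H, IHidx; auto. Qed.

Lemma seq_concl (L : list gtree) (f : nat -> form) :
  (forall i s, nth_error L i = Some s -> f i = concl s) ->
  forall l pre post, L = pre ++ l ++ post -> map f (seq (length pre) (length l)) = map concl l.
Proof.
  intros Hf. induction l as [|x l IH]; intros pre post HL; simpl; auto.
  f_equal.
  - apply Hf. rewrite HL. rewrite nth_error_app2 by lia. rewrite Nat.sub_diag. reflexivity.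
  - replace (S (length pre)) with (length (pre ++ [x])) by (rewrite length_app; simpl; lia).
    apply (IH _ post). rewrite HL, <- app_assoc. reflexivity.
Qed.

Lemma main_gen kappa extra (Hs : form -> Prop) t :
  kappa_steps kappa t -> forall b, (forall X, In X (hyps t) -> Hs X) -> is_bar t b ->
  exists Gamma Delta, Permutation Gamma (bar_grounds t b) /\
    Permutation Delta (bar_conds t b) /\
    derivable kappa extra Hs (MG Gamma Delta (concl t)).
Proof.
  induction 1 as [A | gs cs B Hk Hg IHg Hc IHc]; intros b HH Hb.
  - exfalso. destruct Hb as [_ [Hv Hl]].
    destruct (Hl []) as [p [Hp [[r Hr] _]]]. { exists (Hyp A); simpl; auto. }
    symmetry in Hr; apply app_eq_nil in Hr; destruct Hr; subst.
    apply Hv in Hp; tauto.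
  - set (t := App gs cs B).
    pose proof Hb as Hb'. destruct Hb' as [Hn [Hv Hl]].
    assert (st_eq : forall i s q, nth_error (gs ++ cs) i = Some s -> subtree t (i :: q) = subtree s q).
    { intros i s q E. simpl. rewrite E. reflexivity. }
    assert (Hpos : forall p, In p b -> exists i q s, p = i :: q /\ nth_error (gs ++ cs) i = Some s).
    { intros p Hp. destruct (Hv p Hp) as [Hvp Hne]. destruct p as [|i q]; [congruence|].
      unfold valid_pos in Hvp; simpl in Hvp.
      destruct (nth_error (gs ++ cs) i) eqn:E; [eauto | congruence]. }
    assert (Hhd : forall p, In p b -> hdi p < length gs + length cs).
    { intros p Hp. destruct (Hpos p Hp) as [i [q [s [-> E]]]]. simpl.
      rewrite <- length_app. apply nth_error_Some. congruence. }
    assert (fa_eq : forall i s q, nth_error (gs ++ cs) i = Some s -> formula_at t (i :: q) = formula_at s q).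
    { intros i s q E. unfold formula_at. rewrite (st_eq _ _ _ E). reflexivity. }
    assert (ic_ground : forall i s q, i < length gs -> nth_error (gs ++ cs) i = Some s ->
               in_cond t (i :: q) = in_cond s q).
    { intros i s q Hi E. simpl. rewrite (proj2 (Nat.ltb_lt _ _) Hi).
      rewrite nth_error_app1 in E by auto. rewrite E. reflexivity. }
    assert (ic_cond : forall i q, length gs <= i -> in_cond t (i :: q) = true).
    { intros i q Hi. simpl. destruct (Nat.ltb_spec i (length gs)); [lia | reflexivity]. }
    assert (Hel : forall i p, In p (Bl b i) -> p = i :: tl p).
    { intros i p Hp. unfold Bl in Hp. apply filter_In in Hp. destruct Hp as [Hp E].
      destruct (Hpos p Hp) as [j [q [s [-> _]]]]. simpl in *. apply Nat.eqb_eq in E. subst; auto. }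
    assert (BM : forall i, Bl b i = map (cons i) (map (@tl nat) (Bl b i))).
    { intros i. rewrite map_map. generalize (Hel i). generalize (Bl b i).
      induction l as [|x l IH]; simpl; intros H; auto.
      rewrite <- H at 1 by auto. f_equal. apply IH. auto. }
    assert (BI : forall i, In [i] b -> Bl b i = [[i]]).
    { intros i Hi. apply singleton_nodup.
      - apply NoDup_filter; auto.
      - unfold Bl. apply filter_In. split; auto. simpl. apply Nat.eqb_refl.
      - intros y Hy. pose proof (Hel i y Hy) as Ey.
        unfold Bl in Hy. apply filter_In in Hy. destruct Hy as [Hy _].
        symmetry. apply (bar_antichain t b); auto. exists (tl y). auto. }
    assert (Hin : forall i q, In q (map (@tl nat) (Bl b i)) <-> In (i :: q) b).
    { intros i q. split.
      - intros Hq. apply in_map_iff in Hq. destruct Hq as [p [<- Hp]].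
        rewrite <- (Hel i p Hp). unfold Bl in Hp. apply filter_In in Hp. tauto.
      - intros Hq. apply in_map_iff. exists (i :: q). split; auto.
        unfold Bl. apply filter_In. split; auto. simpl. apply Nat.eqb_refl. }
    assert (CH : forall i s, nth_error (gs ++ cs) i = Some s -> ~ In [i] b ->
       exists Gs Ds, Permutation Gs (bar_grounds s (map (@tl nat) (Bl b i))) /\
         Permutation Ds (bar_conds s (map (@tl nat) (Bl b i))) /\
         derivable kappa extra Hs (MG Gs Ds (concl s))).
    { intros i s E Hni.
      assert (Hbar : is_bar s (map (@tl nat) (Bl b i))).
      { split; [|split].
        - assert (ND : NoDup (Bl b i)) by (apply NoDup_filter; auto).
          rewrite BM in ND. eapply NoDup_map_inv; eauto.
        - intros q Hq. apply Hin in Hq. destruct (Hv _ Hq) as [Hq1 _]. split.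
          + unfold valid_pos in *. rewrite <- (st_eq _ _ _ E). auto.
          + intros ->. auto.
        - intros q [s' [Hs1 Hs2]].
          destruct (Hl (i :: q)) as [p [Hp [[r Hr] Hu]]].
          { exists s'. rewrite (st_eq _ _ _ E). auto. }
          destruct (Hpos p Hp) as [j [q' [s'' [-> _]]]].
          simpl in Hr. injection Hr as <- Hr.
          exists q'. split; [apply Hin; auto|]. split; [exists r; auto|].
          intros p' Hp' [r' Hr']. apply Hin in Hp'.
          assert (i :: p' = i :: q') as Heq.
          { apply Hu; auto. exists r'. rewrite Hr'. reflexivity. }
          injection Heq; auto. }
      assert (Hsub : forall X, In X (hyps s) -> Hs X).
      { intros X HX. apply HH. simpl. apply nth_error_In in E.
        apply in_app_or in E. apply in_or_app.
        destruct E; [left | right]; apply in_flat_map; eauto. }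
      apply nth_error_In in E. apply in_app_or in E. destruct E as [E|E].
      - apply IHg; auto.
      - apply IHc; auto. }
    set (a := fun i => formula_at t [i]).
    assert (Ha : forall i s, nth_error (gs ++ cs) i = Some s -> a i = concl s).
    { intros i s E. unfold a. rewrite (fa_eq _ _ _ E). reflexivity. }
    assert (Hder0 : derivable kappa extra Hs (MG (map concl gs) (map concl cs) B)).
    { apply d_MG_intro. apply d_IG_intro; auto.
      - intros X HX. apply in_map_iff in HX. destruct HX as [s [<- Hs']].
        apply concl_derivable; auto. intros Y HY. apply HH. simpl. apply in_or_app. left.
        apply in_flat_map. eauto.
      - intros X HX. apply in_map_iff in HX. destruct HX as [s [<- Hs']].
        apply concl_derivable; auto. intros Y HY. apply HH. simpl. apply in_or_app. right.
        apply in_flat_map. eauto. }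
    assert (Hget : forall i, i < length gs + length cs -> exists s, nth_error (gs ++ cs) i = Some s).
    { intros i Hi. destruct (nth_error (gs ++ cs) i) eqn:E; eauto.
      exfalso. apply nth_error_None in E. rewrite length_app in E. lia. }
    destruct (L_cond kappa extra Hs a (fun i => map (formula_at t) (Bl b i)) (map concl gs) B
                (seq (length gs) (length cs)) [] []) as [Dmid [HpD HderC]].
    { intros i Hi. apply in_seq in Hi. destruct (Hget i ltac:(lia)) as [s E].
      destruct (in_dec (list_eq_dec Nat.eq_dec) [i] b) as [Hib | Hnib].
      - exists [a i], []. split; [|left; auto].
        rewrite (BI i Hib). simpl. apply Permutation_refl.
      - destruct (CH i s E Hnib) as [Gs [Ds [H1 [H2 H3]]]].
        exists Gs, Ds. split; [|right; rewrite (Ha i s E); auto].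
        eapply perm_trans. apply Permutation_app; eauto.
        unfold bar_grounds, bar_conds. eapply perm_trans. apply perm_partition.
        replace (map (formula_at t) (Bl b i)) with (map (formula_at t) (map (cons i) (map (@tl nat) (Bl b i)))) by (f_equal; symmetry; apply BM).
        rewrite (map_map (cons i)). apply Permutation_refl'.
        apply map_ext. intros q. symmetry. apply fa_eq; auto. }
    { simpl. rewrite (seq_concl (gs ++ cs) a Ha cs gs []); rewrite ?app_nil_r; auto. }
    destruct (L_ground kappa extra Hs a
                (fun i => map (formula_at t) (filter (fun p => negb (in_cond t p)) (Bl b i)))
                (fun i => map (formula_at t) (filter (in_cond t) (Bl b i))) B
                (seq 0 (length gs)) [] [] Dmid) as [Gmid [Dout [HpG [HpDo HderG]]]].
    { intros i Hi. apply in_seq in Hi. destruct (Hget i ltac:(lia)) as [s E].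
      assert (Hi' : i < length gs) by lia.
      destruct (in_dec (list_eq_dec Nat.eq_dec) [i] b) as [Hib | Hnib].
      - exists [a i], []. rewrite (BI i Hib). cbn [filter].
        rewrite (ic_ground i s [] Hi' E). simpl. split; [|split]; auto.
      - destruct (CH i s E Hnib) as [Gs [Ds [H1 [H2 H3]]]].
        exists Gs, Ds. split; [|split; [|right; rewrite (Ha i s E); auto]].
        + assert (EqG : map (formula_at t) (filter (fun p => negb (in_cond t p)) (map (cons i) (map (@tl nat) (Bl b i)))) = bar_grounds s (map (@tl nat) (Bl b i))).
          { unfold bar_grounds. rewrite filter_map_swap, (map_map (cons i)).
            rewrite (filter_ext (fun a0 => negb (in_cond t (i :: a0))) (fun p => negb (in_cond s p))).
            * apply map_ext. intros q. apply fa_eq; auto.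
            * intros q. rewrite (ic_ground i s q Hi' E). reflexivity. }
          eapply perm_trans; [exact H1|]. apply Permutation_refl'.
          transitivity (map (formula_at t) (filter (fun p => negb (in_cond t p)) (map (cons i) (map (@tl nat) (Bl b i))))).
          { symmetry; exact EqG. }
          rewrite <- (BM i). reflexivity.
        + assert (EqD : map (formula_at t) (filter (in_cond t) (map (cons i) (map (@tl nat) (Bl b i)))) = bar_conds s (map (@tl nat) (Bl b i))).
          { unfold bar_conds. rewrite filter_map_swap, (map_map (cons i)).
            rewrite (filter_ext (fun a0 => in_cond t (i :: a0)) (in_cond s)).
            * apply map_ext. intros q. apply fa_eq; auto.
            * intros q. rewrite (ic_ground i s q Hi' E). reflexivity. }
          eapply perm_trans; [exact H2|]. apply Permutation_refl'.
          transitivity (map (formula_at t) (filter (in_cond t) (map (cons i) (map (@tl nat) (Bl b i))))).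
          { symmetry; exact EqD. }
          rewrite <- (BM i). reflexivity. }
    { simpl. pose proof (seq_concl (gs ++ cs) a Ha gs [] cs eq_refl) as E. simpl in E.
      rewrite E. rewrite app_nil_r in HderC. rewrite app_nil_r. exact HderC. }
    assert (Pb : Permutation b (flat_map (Bl b) (seq 0 (length gs) ++ seq (length gs) (length cs)))).
    { replace (seq 0 (length gs) ++ seq (length gs) (length cs)) with (seq 0 (length gs + length cs)).
      - apply perm_blocks; auto.
      - rewrite seq_app. reflexivity. }
    exists Gmid, Dout. split; [|split].
    + eapply perm_trans; [exact HpG|]. unfold bar_grounds.
      eapply perm_trans; [| apply Permutation_map, perm_filter, Permutation_sym, Pb].
      rewrite map_filter_flat_map, flat_map_app.
      rewrite (flat_map_nil _ (seq (length gs) (length cs))), app_nil_r; auto.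
      intros i Hi. apply in_seq in Hi. rewrite filter_all_false; auto.
      intros x Hx. rewrite (Hel i x Hx), ic_cond; auto. lia.
    + eapply perm_trans; [exact HpDo|]. unfold bar_conds.
      eapply perm_trans; [| apply Permutation_map, perm_filter, Permutation_sym, Pb].
      rewrite map_filter_flat_map, flat_map_app.
      apply Permutation_app_head. eapply perm_trans; [exact HpD|].
      apply Permutation_refl'. apply flat_map_ext_in'.
      intros i Hi. apply in_seq in Hi. rewrite filter_all_true; auto.
      intros x Hx. rewrite (Hel i x Hx), ic_cond; auto. lia.
    + simpl in HderG. rewrite app_nil_r in HderG. exact HderG.
Qed.

Theorem mainTheorem1 (kappa : grounding_calculus) (delta : gtree) (A : form)
    (bar : list position) :
  grounding_derivation kappa delta A ->
  is_bar delta bar ->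
  exists Gamma Delta : list form,
    Permutation Gamma (bar_grounds delta bar) /\
    Permutation Delta (bar_conds delta bar) /\
    forall extra : list form -> form -> Prop,
      derivable kappa extra (fun X => In X (hyps delta)) (MG Gamma Delta A).
Proof.
  intros [Hk [_ [gs [cs ->]]]] Hb.
  destruct (main_gen kappa (fun _ _ => False) (fun X => In X (hyps (App gs cs A)))
              _ Hk bar (fun X H => H) Hb) as [G [D [H1 [H2 H3]]]].
  exists G, D. split; [|split]; auto.
  intros extra. apply derivable_mono. exact H3.
Qed.
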